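(* Let $n,m,d$ be positive integers with $n=dm$ and $\gcd(d,m)=1$, and let $r,t\in\mathbb{Z}$ with $\gcd(r,n)=1$. Then \[\kappa(n,r,t)=\frac{|r|_n\,\kappa(d,r,t)\,\kappa(m,r,t)}{\gcd\left(\kappa(d,r,t),|r|_n\right)\gcd\left(\kappa(m,r,t),|r|_n\right)}.\] In particular, $\kappa(d,r,t)$ divides $\kappa(n,r,t)$.
   Context: For an integer $m\geq1$ and an integer $r$ with $\gcd(r,m)=1$, $|r|_m$ denotes the multiplicative order of $r$ modulo $m$ (so $|r|_1=1$). For $k\geq1$, $S_k(x):=1+x+\cdots+x^{k-1}$, and $S_0(x):=0$. For integers $n\geq1$, $r,t$ with $\gcd(r,n)=1$, $\kappa(n,r,t):=\dfrac{n\,|r|_n}{\gcd\left(n,\ t\,S_{|r|_n}(r)\right)}$. *)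

(* Defs.v *)
From mathcomp Require Import all_boot all_order all_algebra.
Set Implicit Arguments. Unset Strict Implicit. Unset Printing Implicit Defensive.
Import Order.TTheory GRing.Theory Num.Theory.
Local Open Scope ring_scope.

Definition unit_pow (m : nat) (r : int) (k : nat) : bool :=
  (r ^+ k == 1 %[mod m%:Z])%Z.

(* |r|_m : the least k >= 1 with r^k = 1 (mod m).  For gcd(r,m)=1 this order
   divides totient m <= m, so searching k in 1..m finds it; the default value 0
   (no such k in 1..m) never arises under the coprimality hypothesis. *)
Definition mord (m : nat) (r : int) : nat :=
  head 0%N [seq k <- iota 1 m | unit_pow m r k].

Definition Ssum (k : nat) (x : int) : int := \sum_(i < k) x ^+ i.

Definition kappa (n : nat) (r t : int) : nat :=
  let o := mord n r in
  let g := absz (t * Ssum o r) in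
  ((n * o) %/ gcdn n g)%N.

(* Main.v *)
Require Import Defs.
From mathcomp Require Import all_boot all_order all_algebra ring zify.
From mathcomp Require Import cyclic.
Import Order.TTheory GRing.Theory Num.Theory.

Lemma coprime_divg N x : 0 < N -> coprime (N %/ gcdn N x) (x %/ gcdn N x).
Proof.
move=> N0; have g0 : 0 < gcdn N x by rewrite gcdn_gt0 N0.
rewrite /coprime.
rewrite -(eqn_pmul2r g0) mul1n muln_gcdl !divnK ?dvdn_gcdl ?dvdn_gcdr //.
Qed.

Lemma key_div N x k : 0 < N ->
  N %/ gcdn N (x * k) = (N %/ gcdn N x) %/ gcdn (N %/ gcdn N x) k.
Proof.
move=> N0; have g0 : 0 < gcdn N x by rewrite gcdn_gt0 N0.
set g := gcdn N x.
have eN : N = N %/ g * g by rewrite divnK // dvdn_gcdl.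
have ex : x = x %/ g * g by rewrite divnK // dvdn_gcdr.
have cop := @coprime_divg N x N0; rewrite -/g in cop.
rewrite {1 2}eN {1}ex -mulnA [g * k]mulnC mulnA -muln_gcdl Gauss_gcdr //.
by rewrite divnMr.
Qed.

Lemma gcd_coprime_mul d m x : coprime d m -> gcdn (d * m) x = gcdn d x * gcdn m x.
Proof.
move=> cdm; set g := gcdn (d * m) x.
have -> : gcdn d x = gcdn g d.
  by rewrite /g gcdnAC [gcdn (d * m) d]gcdnC gcdnMr.
have -> : gcdn m x = gcdn g m.
  by rewrite /g gcdnAC [gcdn (d * m) m]gcdnC gcdnMl.
apply/eqP; rewrite eqn_dvd; apply/andP; split; last first.
  rewrite Gauss_dvd ?dvdn_gcdl //.
  exact: coprime_dvdl (dvdn_gcdr _ _) (coprime_dvdr (dvdn_gcdr _ _) cdm).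
rewrite muln_gcdl dvdn_gcd dvdn_mulr //= muln_gcdr dvdn_gcd dvdn_mull //=.
by rewrite /g dvdn_gcdl.
Qed.
Local Open Scope ring_scope.

Lemma head_filter (p : pred nat) n : forall a k, (a <= k < a + n)%N -> p k ->
  let h := head 0%N [seq x <- iota a n | p x] in
  [/\ (a <= h)%N, (h <= k)%N, p h & forall j, (a <= j < h)%N -> ~~ p j].
Proof.
elim: n => [|n IH] a k; first by move=> h; exfalso; lia.
move=> /andP[ak kan] pk /=.
case pa: (p a) => /=.
  by split=> // j h; exfalso; lia.
have ak' : (a < k)%N.
  by rewrite ltn_neqAle ak andbT; apply/eqP => e; rewrite e pk in pa.
have [h1 h2 h3 h4] := IH a.+1 k ltac:(apply/andP; split; lia) pk.
split=> //; first exact: ltnW.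
move=> j hj; case: (ltngtP a j) => [aj|aj|<-]; last by rewrite pa.
- by apply: h4; apply/andP; split; lia.
- exfalso; lia.
Qed.

Lemma totient_le N : (totient N <= N)%N.
Proof.
rewrite totient_count_coprime.
apply: (@leq_trans (\sum_(0 <= i < N) 1)%N).
  by apply: leq_sum => i _; apply: leq_b1.
by rewrite sum_nat_const_nat subn0 muln1.
Qed.

Lemma upow_totient (N : nat) (r : int) : (0 < N)%N -> coprimez r N ->
  unit_pow N r (totient N).
Proof.
move=> N0 cop; set a := `|(r %% N)%Z|%N.
have ea : (r %% N)%Z = a%:Z by rewrite /a gez0_abs // modz_ge0 // -lt0n.
have ca : coprime a N.
  by move: cop; rewrite /coprimez -gcdz_modl ea.
rewrite /unit_pow; apply/eqP.
rewrite -modzXm ea -[a%:Z]natz -natrX natz modz_nat.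
rewrite -[1 in RHS]/(1%N%:Z) modz_nat Euler_exp_totient //.
Qed.

Lemma upowM (N : nat) (x : int) a q : unit_pow N x a -> unit_pow N x (a * q).
Proof.
rewrite /unit_pow => /eqP h; apply/eqP.
by rewrite exprM -modzXm h modzXm expr1n.
Qed.

Lemma mord_spec (N : nat) (r : int) : (0 < N)%N -> coprimez r N ->
  [/\ (0 < mord N r)%N, unit_pow N r (mord N r) &
      forall j, (0 < j < mord N r)%N -> ~~ unit_pow N r j].
Proof.
move=> N0 cop.
have tk : (1 <= totient N < 1 + N)%N.
  by rewrite totient_gt0 N0 /= add1n ltnS totient_le.
have [h1 h2 h3 h4] := @head_filter (unit_pow N r) N 1 _ tk (upow_totient N r N0 cop).
by split.
Qed.

Lemma mord_dvd (N : nat) (r : int) k : (0 < N)%N -> coprimez r N ->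
  unit_pow N r k -> (mord N r %| k)%N.
Proof.
move=> N0 cop hk; have [o0 ho hmin] := mord_spec N r N0 cop.
set o := mord N r in o0 ho hmin *.
have hs : unit_pow N r (k %% o).
  have e : r ^+ k = r ^+ (o * (k %/ o)) * r ^+ (k %% o).
    by rewrite -exprD mulnC -divn_eq.
  have h1 := upowM _ _ _ (k %/ o) ho.
  move: hk h1; rewrite /unit_pow => /eqP hk /eqP h1; apply/eqP.
  by rewrite -hk e -modzMml h1 modzMml mul1r.
case: (posnP (k %% o)) => [k0|kpos]; first by rewrite /dvdn k0.
by have := hmin (k %% o)%N; rewrite hs kpos ltn_pmod // => /(_ isT).
Qed.
Lemma SsumD k l (x : int) : Ssum (k + l) x = Ssum k x + x ^+ k * Ssum l x.
Proof.
rewrite /Ssum big_split_ord /= mulr_sumr; congr (_ + _).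
by apply: eq_bigr => i _; rewrite exprD.
Qed.
Lemma upow_dvd (N : nat) (x : int) k : unit_pow N x k = (N%:Z %| x ^+ k - 1)%Z.
Proof. by rewrite /unit_pow eqz_mod_dvd. Qed.


Lemma Ssum_mul (N : nat) (x : int) a q : unit_pow N x a ->
  (N%:Z %| Ssum (a * q) x - Ssum a x * q%:Z)%Z.
Proof.
move=> ha; elim: q => [|q IH]; first by rewrite muln0 /Ssum big_ord0 mulr0 subr0.
have e : Ssum (a * q.+1) x - Ssum a x * q.+1%:Z =
   (Ssum (a * q) x - Ssum a x * q%:Z) + (x ^+ (a * q) - 1) * Ssum a x.
  rewrite mulnS addnC SsumD -[q.+1]addn1 PoszD mulrDr mulr1; ring.
rewrite e rpredD // dvdz_mulr //; rewrite -upow_dvd; exact: upowM.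
Qed.

Lemma gcdz_congr (D y z : int) : (D %| y - z)%Z -> gcdz D y = gcdz D z.
Proof.
move=> h; have e : y = ((y - z) %/ D)%Z * D + z by rewrite divzK // subrK.
by rewrite {1}e gcdzMDl.
Qed.

Lemma factor (D : nat) (r t : int) o : (0 < D)%N -> coprimez r D ->
  unit_pow D r o -> 
  ((D %/ gcdn D `|(t * Ssum o r)%R|) * gcdn (kappa D r t) o = kappa D r t)%N.
Proof.
move=> D0 cop ho.
have [a0 ha _] := mord_spec D r D0 cop.
have ao := mord_dvd D r o D0 cop ho.
set a := mord D r in a0 ha ao *.
set q := (o %/ a)%N.
have eo : o = (a * q)%N by rewrite mulnC divnK.
have hg : gcdn D `|(t * Ssum o r)%R| = gcdn D (`|(t * Ssum a r)%R| * q).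
  have h : gcdz D (t * Ssum o r) = gcdz D (t * Ssum a r * q%:Z).
    apply: gcdz_congr.
    have -> : t * Ssum o r - t * Ssum a r * q%:Z = t * (Ssum (a * q) r - Ssum a r * q%:Z).
      by rewrite -eo; ring.
    by apply: dvdz_mull; apply: Ssum_mul.
  by move: h; rewrite /gcdz => -[] ->; rewrite abszM.
rewrite hg key_div //.
set A := (D %/ gcdn D `|(t * Ssum a r)%R|)%N.
have ek : kappa D r t = (a * A)%N.
  by rewrite /kappa -/a /A muln_divA ?dvdn_gcdl // mulnC.
rewrite ek eo -muln_gcdr mulnCA divnK ?dvdn_gcdl //.
Qed.

Theorem lemma3p3 (n m d : nat) (r t : int) :
  (0 < n)%N -> (0 < m)%N -> (0 < d)%N -> n = (d * m)%N -> coprime d m ->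
  coprimez r n%:Z ->
  (kappa n r t * (gcdn (kappa d r t) (mord n r) * gcdn (kappa m r t) (mord n r))
     = mord n r * kappa d r t * kappa m r t)%N
  /\ (kappa d r t %| kappa n r t)%N.
Proof.
move=> n0 m0 d0 en cdm cop.
have [o0 ho _] := mord_spec n r n0 cop.
set o := mord n r in o0 ho *.
have dn : (d %| n)%N by rewrite en dvdn_mulr.
have mn : (m %| n)%N by rewrite en dvdn_mull.
have copd : coprimez r d := coprimez_dvdr dn cop.
have copm : coprimez r m := coprimez_dvdr mn cop.
have hod : unit_pow d r o.
  by move: ho; rewrite !upow_dvd => /(dvdz_trans _); apply; rewrite /dvdz /=.
have hom : unit_pow m r o.
  by move: ho; rewrite !upow_dvd => /(dvdz_trans _); apply; rewrite /dvdz /=.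
have fd := factor d r t o d0 copd hod.
have fm := factor m r t o m0 copm hom.
set c := `|(t * Ssum o r)%R|%N in fd fm.
set Xd := (d %/ gcdn d c)%N in fd.
set Xm := (m %/ gcdn m c)%N in fm.
have ekn : kappa n r t = (o * Xd * Xm)%N.
  rewrite /kappa -/o -/c en gcd_coprime_mul //.
  have gd0 : (0 < gcdn d c)%N by rewrite gcdn_gt0 d0.
  have gm0 : (0 < gcdn m c)%N by rewrite gcdn_gt0 m0.
  have e : (d * m * o = (o * Xd * Xm) * (gcdn d c * gcdn m c))%N.
    rewrite /Xd /Xm.
    transitivity (o * (d %/ gcdn d c * gcdn d c) * (m %/ gcdn m c * gcdn m c))%N.
      by rewrite !divnK ?dvdn_gcdl //; ring.
    ring.
  by rewrite e mulnK // muln_gt0 gd0.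
split.
  by rewrite ekn -[in RHS]fd -[in RHS]fm; ring.
rewrite ekn -[X in (X %| _)%N]fd.
rewrite (_ : o * Xd * Xm = Xd * o * Xm)%N; last by ring.
by apply: dvdn_mulr; apply: dvdn_mul => //; apply: dvdn_gcdr.
Qed.
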